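(* Let $\rho$ be a density operator on $\mathbb{C}^d$. Let $\rho'=U_A(\rho\otimes|0\rangle\langle0|^{\otimes d})U_A^\dagger$, a state of $d+1$ parties (the qudit and $d$ qubits), and let $\rho''=\Delta(\rho')$, a state of $d$ parties (the $d$ qubits). Then for every $2\le k\le d$ the following are equivalent: (i) $\mathrm{CN}(\rho)=k$; (ii) $\mathrm{ed}(\rho')=k+1$; (iii) $\mathrm{ed}(\rho'')=k$.
   Context: Fix an orthonormal (incoherent) basis $\{|i\rangle\}_{i=1}^d$ of $\mathbb{C}^d$. The coherence rank $\mathrm{CR}(|\psi\rangle)$ is the number of nonzero coefficients of $|\psi\rangle$ in this basis; the coherence number is $\mathrm{CN}(\rho)=\min_{\{p_i,|\psi_i\rangle\}}\max_i\mathrm{CR}(|\psi_i\rangle)$ over all pure-state decompositions $\rho=\sum_ip_i|\psi_i\rangle\langle\psi_i|$. For $1\le i\le d$, $|\underline{2^{d-i}}\rangle\in(\mathbb{C}^2)^{\otimes d}$ denotes $|0\rangle^{\otimes(i-1)}\otimes|1\rangle\otimes|0\rangle^{\otimes(d-i)}$. The activation unitary on $\mathbb{C}^d\otimes(\mathbb{C}^2)^{\otimes d}$ is $U_A=\sum_{i=1}^d|i\rangle\langle i|\otimes\mathbb{1}_2^{\otimes(i-1)}\otimes\sigma_x\otimes\mathbb{1}_2^{\otimes(d-i)}$ (so $U_A\,|i\rangle|0\rangle^{\otimes d}=|i\rangle|\underline{2^{d-i}}\rangle$). Let $\mathcal{F}$ be the Fourier unitary on $\mathbb{C}^d$, $\mathcal{F}|j\rangle=\frac1{\sqrt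 d}\sum_{m=1}^d e^{2\pi i jm/d}|m\rangle$, and for $m=1,\dots,d$ let $U_D^{(m)}=\bigotimes_{j=1}^d\big(|0\rangle\langle0|+e^{-2\pi i jm/d}|1\rangle\langle1|\big)$ acting on the $d$ qubits (the $j$-th factor on the $j$-th qubit). The one-way LOCC decoupling map is $\Delta(X)=\sum_{m=1}^d U_D^{(m)}\,\mathrm{Tr}_{\mathrm{qudit}}\big[(|m\rangle\langle m|\otimes\mathbb{1})(\mathcal{F}\otimes\mathbb{1})X(\mathcal{F}^\dagger\otimes\mathbb{1})\big]\,U_D^{(m)\dagger}$; on pure states it sends $\sum_ic_i|i\rangle|\underline{2^{d-i}}\rangle$ to $\sum_ic_i|\underline{2^{d-i}}\rangle$. A pure state of a multipartite system is $k$-producible if it is a tensor product of factors each pertaining to at most $k$ parties; a mixed state is $k$-producible if it is a convex combination of $k$-producible pure states; $\mathrm{ed}(\rho)=k$ (entanglement depth; genuinely $k$-partite entangled) means $\rho$ is $k$-producible but not $(k-1)$-producible. *)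

(* Defs.v *)
From HB Require Import structures.
From mathcomp Require Import all_boot all_order all_algebra.
Set Implicit Arguments. Unset Strict Implicit. Unset Printing Implicit Defensive.
Import Order.TTheory GRing.Theory Num.Theory.
Local Open Scope ring_scope.

Section Q.
Variable C : numClosedFieldType.

(* Operators on the Hilbert space with orthonormal basis indexed by T:
   A i j = <i|A|j>. *)
Definition op (T : finType) := T -> T -> C.

Definition opmul (T : finType) (A B : op T) : op T :=
  fun i j => \sum_(k : T) A i k * B k j.
Definition adj (T : finType) (A : op T) : op T := fun i j => (A j i)^*.
Definition tens (T1 T2 : finType) (A : op T1) (B : op T2) : op (T1 * T2)%type :=
  fun x y => A x.1 y.1 * B x.2 y.2.
Definition id_op (T : finType) : op T := fun i j => (i == j)%:R.

Definition density (T : finType) (A : op T) : Prop :=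
  (forall v : T -> C, 0 <= \sum_(i : T) \sum_(j : T) (v i)^* * A i j * v j)
  /\ \sum_(i : T) A i i = 1.

Definition mixture_of (T : finType) (good : (T -> C) -> Prop) (A : op T) : Prop :=
  exists (n : nat) (p : 'I_n -> C) (psi : 'I_n -> T -> C),
    (forall i, 0 <= p i) /\ \sum_(i < n) p i = 1 /\
    (forall i, \sum_(t : T) `|psi i t| ^+ 2 = 1) /\
    (forall i, good (psi i)) /\
    forall a b, A a b = \sum_(i < n) p i * psi i a * (psi i b)^*.

Definition coh_rank (T : finType) (psi : T -> C) : nat := #|[pred t | psi t != 0]|.

Definition CN_le (T : finType) (rho : op T) (k : nat) : Prop :=
  mixture_of (fun psi => (coh_rank psi <= k)%N) rho.

Definition coherence_number_is (T : finType) (rho : op T) (k : nat) : Prop :=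
  CN_le rho k /\ ~ CN_le rho k.-1.

(* A multipartite system: basis B of the joint space, set of parties J, and
   ag j b b' meaning "the local basis label of party j is the same in b and b'".
   A function on B is local to S if it depends only on the labels of parties
   in S; a product over a partition of such local factors is a tensor product. *)
Definition local_to (J B : finType) (ag : J -> B -> B -> Prop) (S : {set J})
    (phi : B -> C) : Prop :=
  forall b b', (forall j, j \in S -> ag j b b') -> phi b = phi b'.

Definition kprod_pure (J B : finType) (ag : J -> B -> B -> Prop) (k : nat)
    (psi : B -> C) : Prop :=
  exists P : {set {set J}},
    partition P [set: J] /\ (forall S, S \in P -> (#|S| <= k)%N) /\
    exists phi : {set J} -> B -> C,
      (forall S, S \in P -> local_to ag S (phi S)) /\
      forall b, psi b = \prod_(S in P) phi S b.

Definition kproducible (J B : finType) (ag : J -> B -> B -> Prop) (k : nat)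
    (rho : op B) : Prop := mixture_of (kprod_pure ag k) rho.

Definition edepth_is (J B : finType) (ag : J -> B -> B -> Prop) (rho : op B)
    (k : nat) : Prop :=
  kproducible ag k rho /\ ~ kproducible ag k.-1 rho.

(* Qudit basis |i>, i = 1..d, is the ordinal i-1 : 'I_d.
   d qubits: bit strings {ffun 'I_d -> bool}; qubit j (1-based) is ordinal j-1. *)
Definition qubits (d : nat) := {ffun 'I_d -> bool}.

Definition ag_qubits (d : nat) (j : 'I_d) (b b' : qubits d) : Prop := b j = b' j.

(* parties of qudit + d qubits: None = the qudit, Some j = qubit j *)
Definition ag_full (d : nat) (j : option 'I_d) (b b' : ('I_d * qubits d)%type) : Prop :=
  match j with
  | None => b.1 = b'.1
  | Some j => b.2 j = b'.2 j
  end.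

Definition qtensor (d : nat) (M : 'I_d -> bool -> bool -> C) : op (qubits d) :=
  fun b b' => \prod_(j < d) M j (b j) (b' j).

Definition id2 : bool -> bool -> C := fun a b => (a == b)%:R.
Definition sigmax : bool -> bool -> C := fun a b => (a != b)%:R.
Definition proj0 : bool -> bool -> C := fun a b => (~~ a && ~~ b)%:R.

(* U_A = sum_i |i><i| (x) 1^{(i-1)} (x) sigma_x (x) 1^{(d-i)} *)
Definition U_A (d : nat) : op ('I_d * qubits d)%type :=
  fun x y => (x.1 == y.1)%:R *
    qtensor (fun j => if j == x.1 then sigmax else id2) x.2 y.2.

(* e^{2 pi i / d}: d.-root (-1) is e^{i pi / d} (minimal nonneg. argument) *)
Definition omega (d : nat) : C := (d.-root (-1)) ^+ 2.

(* Fourier: F|j> = 1/sqrt d sum_m e^{2 pi i j m/d} |m>, j,m = 1..d *)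
Definition fourier (d : nat) : op 'I_d :=
  fun m j => omega d ^+ ((j.+1) * (m.+1)) / sqrtC (d%:R).

(* U_D^{(m)} = (x)_j (|0><0| + e^{-2 pi i j m/d} |1><1|), j = 1..d *)
Definition U_D (d : nat) (m : 'I_d) : op (qubits d) :=
  qtensor (fun j a b =>
    if a == b then (if a then omega d ^- ((j.+1) * (m.+1)) else 1) else 0).

Definition proj_ket (T : finType) (m : T) : op T :=
  fun i j => ((i == m) && (j == m))%:R.

Definition ptrace_qudit (d : nat) (X : op ('I_d * qubits d)%type) : op (qubits d) :=
  fun b b' => \sum_(i : 'I_d) X (i, b) (i, b').

Definition Delta (d : nat) (X : op ('I_d * qubits d)%type) : op (qubits d) :=
  fun b b' => \sum_(m : 'I_d)
    opmul (opmul (U_D m)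
      (ptrace_qudit
        (opmul (tens (proj_ket m) (@id_op (qubits d)))
          (opmul (tens (@fourier d) (@id_op (qubits d)))
            (opmul X (tens (adj (@fourier d)) (@id_op (qubits d))))))))
      (adj (U_D m)) b b'.

Definition rho_prime (d : nat) (rho : op 'I_d) : op ('I_d * qubits d)%type :=
  opmul (@U_A d) (opmul (tens rho (qtensor (fun _ => proj0))) (adj (@U_A d))).

End Q.

(* Main.v *)
Require Import Defs.
From HB Require Import structures.
From mathcomp Require Import all_boot all_order all_algebra.
From Stdlib Require Import Classical FunctionalExtensionality.
Set Implicit Arguments. Unset Strict Implicit. Unset Printing Implicit Defensive.
Import Order.TTheory GRing.Theory Num.Theory.
Local Open Scope ring_scope.

Section Gen.
Variable C : numClosedFieldType.

Lemma sum_only (T : finType) (F : T -> C) z0 :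
  (forall z, z != z0 -> F z = 0) -> \sum_z F z = F z0.
Proof. by move=> H; rewrite (bigD1 z0) //= big1 ?addr0 // => z /H. Qed.

Lemma prod_bool (T : finType) (P : pred T) :
  \prod_(j : T) (P j)%:R = ([forall j, P j])%:R :> C.
Proof.
case: (boolP [forall j, P j]) => [/forallP H | /forallPn [j Hj]].
  by rewrite big1 // => j _; rewrite H.
by rewrite (bigD1 j) //= (negbTE Hj) mul0r.
Qed.

Definition ext (T1 T2 : finType) (g : T2 -> T1) (psi : T2 -> C) : T1 -> C :=
  fun x => \sum_a (x == g a)%:R * psi a.

Lemma ext_g (T1 T2 : finType) (g : T2 -> T1) (psi : T2 -> C) a :
  injective g -> ext g psi (g a) = psi a.
Proof.
move=> ig; rewrite /ext (sum_only (z0 := a)) ?eqxx ?mul1r // => z Hz.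
by rewrite inj_eq // eq_sym (negbTE Hz) mul0r.
Qed.

Lemma ext_out (T1 T2 : finType) (g : T2 -> T1) (psi : T2 -> C) x :
  x \notin [set g a | a in [set: T2]] -> ext g psi x = 0.
Proof.
move=> Hx; rewrite /ext big1 // => a _; case: eqP => [E|]; last by rewrite mul0r.
by rewrite E imset_f ?inE in Hx.
Qed.

Lemma sum_image (T1 T2 : finType) (g : T2 -> T1) (F : T1 -> C) :
  injective g -> (forall x, x \notin [set g a | a in [set: T2]] -> F x = 0) ->
  \sum_x F x = \sum_a F (g a).
Proof.
move=> ig H; rewrite (bigID (fun x => x \in [set g a | a in [set: T2]])) /=.
rewrite [X in _ + X]big1 ?addr0; last by move=> x; apply: H.
rewrite big_imset /=; last by move=> a b _ _; apply: ig.
by apply: eq_bigl => a; rewrite inE.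
Qed.

Lemma unit_ext (T1 T2 : finType) (g : T2 -> T1) (psi : T2 -> C) :
  injective g -> \sum_x `|ext g psi x| ^+ 2 = \sum_a `|psi a| ^+ 2.
Proof.
move=> ig; rewrite (sum_image (g := g) (F := fun x => `|ext g psi x| ^+ 2)) //.
  by apply: eq_bigr => a _; rewrite ext_g.
by move=> x Hx; rewrite ext_out // normr0 expr0n.
Qed.

Definition repr_by (T1 T2 : finType) (g : T2 -> T1) (A1 : op C T1) (A2 : op C T2) :=
  forall x y, A1 x y = \sum_a \sum_b (x == g a)%:R * (y == g b)%:R * A2 a b.

Lemma repr_g (T1 T2 : finType) (g : T2 -> T1) A1 A2 a b :
  injective g -> repr_by g A1 A2 -> A1 (g a) (g b) = A2 a b.
Proof.
move=> ig H; rewrite H (sum_only (z0 := a)) => [|z Hz].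
  rewrite (sum_only (z0 := b)) => [|z Hz]; first by rewrite !eqxx !mul1r.
  have Hz' : (b == z) = false by rewrite eq_sym (negbTE Hz).
  by rewrite !(inj_eq ig) Hz' mulr0 mul0r.
have Hz' : (a == z) = false by rewrite eq_sym (negbTE Hz).
by rewrite big1 // => c _; rewrite !(inj_eq ig) Hz' !mul0r.
Qed.

Lemma repr_out (T1 T2 : finType) (g : T2 -> T1) A1 A2 x y :
  repr_by g A1 A2 ->
  (x \notin [set g a | a in [set: T2]]) || (y \notin [set g a | a in [set: T2]]) ->
  A1 x y = 0.
Proof.
move=> H Hxy; rewrite H big1 // => a _; rewrite big1 // => b _.
case/orP: Hxy => Hn.
  case: eqP => [E|]; last by rewrite !mul0r.
  by rewrite E imset_f ?inE in Hn.
case: (y =P g b) => [E|]; last by rewrite mulr0 mul0r.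
by rewrite E imset_f ?inE in Hn.
Qed.

Lemma push (T1 T2 : finType) (g : T2 -> T1) A1 A2
  (good1 : (T1 -> C) -> Prop) (good2 : (T2 -> C) -> Prop) :
  injective g -> repr_by g A1 A2 ->
  (forall psi, \sum_a `|psi a| ^+ 2 = 1 -> good2 psi -> good1 (ext g psi)) ->
  mixture_of good2 A2 -> mixture_of good1 A1.
Proof.
move=> ig HR Hg [n [p [psi [p0 [p1 [pu [pg pd]]]]]]].
exists n, p, (fun i => ext g (psi i)); split=> //; split=> //; split.
  by move=> i; rewrite unit_ext.
split; first by move=> i; apply: Hg.
move=> x y.
case: (boolP (x \in [set g a | a in [set: T2]])) => [/imsetP[a _ ->]|Hx]; last first.
  rewrite (repr_out HR) ?Hx // big1 // => i _; rewrite ext_out // mulr0 mul0r //.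
case: (boolP (y \in [set g a | a in [set: T2]])) => [/imsetP[b _ ->]|Hy]; last first.
  rewrite (repr_out HR) ?Hy ?orbT // big1 // => i _; rewrite (ext_out _ Hy).
  by rewrite conjC0 mulr0.
rewrite (repr_g _ _ ig HR) pd; apply: eq_bigr => i _; by rewrite !ext_g.
Qed.

Lemma pull (T1 T2 : finType) (g : T2 -> T1) A1 A2
  (good1 : (T1 -> C) -> Prop) (good2 : (T2 -> C) -> Prop) (u0 : T2 -> C) :
  injective g -> repr_by g A1 A2 ->
  \sum_a `|u0 a| ^+ 2 = 1 -> good2 u0 ->
  (forall psi, \sum_a `|psi a| ^+ 2 = 1 -> good1 (ext g psi) -> good2 psi) ->
  mixture_of good1 A1 -> mixture_of good2 A2.
Proof.
move=> ig HR u1 gu Hg [n [p [psi [p0 [p1 [pu [pg pd]]]]]]].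
pose psi2 i := if p i == 0 then u0 else (fun a => psi i (g a)).
have supp i x : p i != 0 -> x \notin [set g a | a in [set: T2]] -> psi i x = 0.
  move=> pi Hx.
  have Z : \sum_(j < n) p j * psi j x * (psi j x)^* = 0.
    by rewrite -pd (repr_out HR) ?Hx.
  have H0 : forall j : 'I_n, xpredT j -> 0 <= p j * psi j x * (psi j x)^*.
    by move=> j _; rewrite -mulrA mulr_ge0 // mul_conjC_ge0.
  have /eqP := @psumr_eq0P _ _ _ _ H0 Z i isT.
  rewrite -mulrA -normCK mulf_eq0 (negbTE pi) /=.
  by rewrite expf_eq0 /= normr_eq0 => /eqP.
have U i : p i != 0 -> \sum_a `|psi i (g a)| ^+ 2 = 1.
  move=> pi; rewrite -(pu i) (sum_image (g:=g) (F := fun t => `|psi i t|^+2)) //.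
  by move=> x Hx; rewrite supp // normr0 expr0n.
have E i : p i != 0 -> psi i = ext g (psi2 i).
  move=> pi; apply: functional_extensionality => x.
  case: (boolP (x \in [set g a | a in [set: T2]])) => [/imsetP[a _ ->]|Hx].
    by rewrite ext_g // /psi2 (negbTE pi).
  by rewrite ext_out // supp.
exists n, p, psi2; split=> //; split=> //; split.
  move=> i; rewrite /psi2; case: eqP => [//|/eqP pi].
  exact: U.
split.
  move=> i; rewrite /psi2; case: eqP => [//|/eqP pi].
  apply: Hg; first exact: U.
  have := E i pi; rewrite /psi2 (negbTE pi) => <-; exact: pg.
move=> a b; rewrite -(repr_g _ _ ig HR) pd; apply: eq_bigr => i _.
rewrite /psi2; case: eqP => [->|]; by rewrite ?mul0r.
Qed.

End Gen.

Section Gen2.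
Variable C : numClosedFieldType.

Lemma kprod_block (J B : finType) (ag : J -> B -> B -> Prop) (k : nat)
  (psi : B -> C) (S0 : {set J}) (phi0 : B -> C) (ok : J -> B -> bool) :
  S0 != set0 -> (#|S0| <= k)%N -> (1 <= k)%N ->
  local_to ag S0 phi0 ->
  (forall j, j \notin S0 -> local_to ag [set j] (fun b => (ok j b)%:R : C)) ->
  (forall b, psi b = phi0 b * \prod_(j in ~: S0) (ok j b)%:R) ->
  kprod_pure ag k psi.
Proof.
move=> S0n S0k k1 L0 Lj Hpsi.
set Q := [set [set j] | j in ~: S0].
have S0Q : S0 \notin Q.
  apply/imsetP=> [[j]]; rewrite inE => jS E.
  by move: jS; rewrite E set11.
have set1i : {in ~: S0 &, injective (fun j : J => [set j])}.
  by move=> x y _ _; apply: set1_inj.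
have covT : cover (S0 |: Q) = [set: J].
  apply/setP=> x; rewrite inE; apply/bigcupP.
  case: (boolP (x \in S0)) => xS; first by exists S0 => //; rewrite setU11.
  exists [set x]; last by rewrite set11.
  by rewrite setU1r // imset_f // inE.
exists (S0 |: Q); split.
  apply/and3P; split; first by rewrite covT.
    rewrite /trivIset covT big_setU1 //= big_imset //=.
    rewrite (eq_bigr (fun _ => 1%N)) => [|j _]; last by rewrite cards1.
    by rewrite sum_nat_const muln1 cardsC cardsT.
  rewrite in_setU1 negb_or eq_sym S0n /=.
  apply/imsetP=> [[j _ E]].
  by have := set11 j; rewrite -E inE.
split.
  move=> S /setU1P [->//|/imsetP [j _ ->]].
  by rewrite cards1.
exists (fun S => if S == S0 then phi0 else fun b => \prod_(j in S) (ok j b)%:R).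
split.
  move=> S /setU1P [->|SQ]; first by rewrite eqxx.
  have -> : (S == S0) = false.
    by apply/negbTE; apply: contraNneq S0Q => <-.
  move: SQ => /imsetP [j]; rewrite inE => jS ->.
  rewrite /local_to => b b' Hbb' /=; rewrite !big_set1; exact: (Lj j jS b b' Hbb').
move=> b; rewrite big_setU1 //= eqxx Hpsi; congr (_ * _).
rewrite big_imset //=; apply: eq_bigr => j; rewrite inE => jS.
have -> : ([set j] == S0) = false.
  by apply/negbTE/eqP => E; move: jS; rewrite -E set11.
by rewrite big_set1.
Qed.

Lemma sep (J B : finType) (ag : J -> B -> B -> Prop) (psi : B -> C)
  (P : {set {set J}}) (phi : {set J} -> B -> C) c c1 c2 :
  (forall S, S \in P -> local_to ag S (phi S)) ->
  (forall b, psi b = \prod_(S in P) phi S b) ->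
  psi c = 0 -> psi c1 != 0 -> psi c2 != 0 ->
  exists2 T, T \in P &
    (exists2 x, x \in T & ~ ag x c c1) /\ (exists2 y, y \in T & ~ ag y c c2).
Proof.
move=> L Hp H0 H1 H2.
move: H0 => /eqP; rewrite Hp => /prodf_eq0 [T TP /eqP phT].
have gen c' : psi c' != 0 -> exists2 x, x \in T & ~ ag x c c'.
  move=> Hc; apply: NNPP => Hn; move: Hc; rewrite Hp.
  rewrite (bigD1 T) //= -(L T TP c c'); first by rewrite phT mul0r eqxx.
  move=> j jT; apply: NNPP => Hj; apply: Hn; by exists j.
by exists T => //; split; apply: gen.
Qed.

End Gen2.

Section Conc.
Variable C : numClosedFieldType.
Variable d : nat.

Definition eb (i : 'I_d) : qubits d := [ffun j => j == i].
Definition g1 (i : 'I_d) : ('I_d * qubits d)%type := (i, eb i).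
Definition supp (psi : 'I_d -> C) : {set 'I_d} := [set i | psi i != 0].

Lemma coh_supp psi : coh_rank psi = #|supp psi|.
Proof. by rewrite /coh_rank /supp cardsE. Qed.

Lemma eb_inj : injective eb.
Proof. by move=> i j /ffunP /(_ i); rewrite !ffunE eqxx => /esym/eqP. Qed.

Lemma g1_inj : injective g1.
Proof. by move=> i j []. Qed.

Lemma ext1E (psi : 'I_d -> C) a b : ext g1 psi (a, b) = psi a * (b == eb a)%:R.
Proof.
rewrite /ext (sum_only (z0 := a)) => [|z Hz].
  by rewrite /g1 xpair_eqE eqxx /= mulrC.
by rewrite /g1 xpair_eqE eq_sym (negbTE Hz) mul0r.
Qed.

Lemma ext2E (psi : 'I_d -> C) a : ext eb psi (eb a) = psi a.
Proof. by rewrite ext_g //; apply: eb_inj. Qed.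

Lemma unit_nz (psi : 'I_d -> C) : \sum_a `|psi a| ^+ 2 = 1 -> supp psi != set0.
Proof.
move=> u; apply/negP => /eqP S0.
have : \sum_a `|psi a| ^+ 2 = 0 :> C.
  apply: big1 => a _; have : a \notin supp psi by rewrite S0 inE.
  by rewrite inE negbK => /eqP ->; rewrite normr0 expr0n.
by rewrite u => /eqP; rewrite oner_eq0.
Qed.

Lemma zero_term (psi : 'I_d -> C) (b : qubits d) j a :
  psi j = 0 -> b j -> (b == eb a)%:R * psi a = 0.
Proof.
move=> Hj bj; case: (b =P eb a) => [E|_]; last by rewrite mul0r.
by move: bj; rewrite E ffunE => /eqP <-; rewrite Hj mulr0.
Qed.

Lemma good_c (psi : 'I_d -> C) m :
  \sum_a `|psi a| ^+ 2 = 1 -> (coh_rank psi <= m)%N -> (1 <= m)%N ->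
  kprod_pure (@ag_qubits d) m (ext eb psi).
Proof.
move=> u r1 m1.
pose S := supp psi.
pose mb (b : qubits d) : qubits d := [ffun j => (j \in S) && b j].
apply: (kprod_block (S0 := S) (phi0 := fun b => ext eb psi (mb b))
                    (ok := fun j (b : qubits d) => ~~ b j)).
- exact: unit_nz.
- by rewrite -coh_supp.
- exact: m1.
- move=> b b' H /=.
  have -> // : mb b = mb b'.
  apply/ffunP => j; rewrite !ffunE; case: (boolP (j \in S)) => jS //=.
  by have := H j jS; rewrite /ag_qubits => ->.
- move=> j _ b b' H /=; have := H j (set11 j); rewrite /ag_qubits => -> //.
- move=> b; case: (boolP [exists j, (j \notin S) && b j]).
    case/existsP => j /andP [jS bj].
    rewrite (bigD1 j) /=; last by rewrite inE.
    rewrite bj mul0r mulr0 /ext big1 // => a _; apply: (zero_term _ _ bj).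
    by move: jS; rewrite /S inE negbK => /eqP.
  move=> Hn.
  have Hb : forall j, j \notin S -> b j = false.
    move=> j jS; apply/negP => bj; apply: (negP Hn); apply/existsP; exists j.
    by rewrite jS.
  rewrite big1 ?mulr1; last by move=> j; rewrite inE => jS; rewrite Hb.
  have -> // : mb b = b.
  apply/ffunP => j; rewrite ffunE; case: (boolP (j \in S)) => //= jS.
  by rewrite Hb.
Qed.

Lemma good_d (psi : 'I_d -> C) m :
  kprod_pure (@ag_qubits d) m (ext eb psi) -> (coh_rank psi <= m)%N.
Proof.
case=> P [Pp [Pk [phi [Pl Pe]]]].
rewrite coh_supp.
case: (boolP (supp psi == set0)) => [/eqP -> | /set0Pn [i0 Hi0]]; first by rewrite cards0.
have tiP := partition_trivIset Pp.
have covP := cover_partition Pp.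
have Bmem : pblock P i0 \in P by apply: pblock_mem; rewrite covP inE.
apply: leq_trans (Pk _ Bmem).
apply: subset_leq_card; apply/subsetP => j Hj.
case: (eqVneq j i0) => [->|nji]; first by rewrite mem_pblock covP inE.
have nz a : a \in supp psi -> ext eb psi (eb a) != 0 by rewrite ext2E inE.
pose c : qubits d := [ffun x => (x == i0) || (x == j)].
have c0 : ext eb psi c = 0.
  rewrite /ext big1 // => a _; case: (c =P eb a) => [E'|]; last by rewrite mul0r.
  exfalso.
  have := congr1 (fun f : qubits d => f i0) E'; rewrite !ffunE eqxx /= => /esym/eqP Ea.
  have := congr1 (fun f : qubits d => f j) E'; rewrite !ffunE eqxx orbT -Ea.
  by rewrite (negbTE nji).
have [T TP [[x xT Hx] [y yT Hy]]] := sep Pl Pe c0 (nz i0 Hi0) (nz j Hj).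
have exj : x = j.
  case: (eqVneq x j) => // nxj; exfalso; apply: Hx.
  by rewrite /ag_qubits !ffunE (negbTE nxj) orbF.
have eyi : y = i0.
  case: (eqVneq y i0) => // nyi; exfalso; apply: Hy.
  by rewrite /ag_qubits !ffunE (negbTE nyi).
have := def_pblock tiP TP yT; rewrite eyi => ->; by rewrite -exj.
Qed.


Lemma good_a (psi : 'I_d -> C) m :
  \sum_a `|psi a| ^+ 2 = 1 -> (coh_rank psi <= m)%N ->
  kprod_pure (@ag_full d) m.+1 (ext g1 psi).
Proof.
move=> u r1.
pose S := supp psi.
pose S0 : {set option 'I_d} := None |: [set Some i | i in S].
pose mb (b : qubits d) : qubits d := [ffun j => (j \in S) && b j].
have memS0 i : (Some i \in S0) = (i \in S).
  by rewrite /S0 in_setU1 /= (mem_imset _ _ (@Some_inj _)).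
apply: (kprod_block (S0 := S0)
          (phi0 := fun b : ('I_d * qubits d)%type => ext g1 psi (b.1, mb b.2))
          (ok := fun j (b : ('I_d * qubits d)%type) =>
                   if j is Some i then ~~ b.2 i else true)).
- by apply/set0Pn; exists None; rewrite setU11.
- rewrite cardsU1 (card_imset _ (@Some_inj _)) -coh_supp.
  have -> : (None \notin [set Some i | i in S]) = true.
    by apply/negP => /imsetP [].
  by [].
- by [].
- move=> b b' H /=.
  have E1 : b.1 = b'.1 by have := H None (setU11 _ _).
  have -> : mb b.2 = mb b'.2.
    apply/ffunP => j; rewrite !ffunE; case: (boolP (j \in S)) => jS //=.
    by have := H (Some j); rewrite memS0 => /(_ jS).
  by rewrite E1.
- move=> [i|] _ b b' H //=.
  by have := H (Some i) (set11 _); rewrite /ag_full => ->.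
- move=> [b1 b2]; rewrite /= !ext1E.
  case: (boolP [exists j, (j \notin S) && b2 j]).
    case/existsP => j /andP [jS bj].
    rewrite (bigD1 (Some j)) /=; last by rewrite inE memS0.
    rewrite bj mul0r mulr0 mulrC; apply: (zero_term _ _ bj).
    by move: jS; rewrite /S inE negbK => /eqP.
  move=> Hn.
  have Hb : forall j, j \notin S -> b2 j = false.
    move=> j jS; apply/negP => bj; apply: (negP Hn); apply/existsP; exists j.
    by rewrite jS.
  rewrite big1 ?mulr1; last first.
    by move=> [j|] //; rewrite inE memS0 => jS; rewrite Hb.
  have -> // : mb b2 = b2.
  apply/ffunP => j; rewrite ffunE; case: (boolP (j \in S)) => //= jS.
  by rewrite Hb.
Qed.

Lemma good_b (psi : 'I_d -> C) m : (1 <= m)%N ->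
  kprod_pure (@ag_full d) m.+1 (ext g1 psi) -> (coh_rank psi <= m)%N.
Proof.
move=> m1 [P [Pp [Pk [phi [Pl Pe]]]]].
rewrite coh_supp.
case: (leqP #|supp psi| 1) => [H1|H2]; first exact: leq_trans H1 m1.
have tiP := partition_trivIset Pp.
have covP := cover_partition Pp.
pose B0 := pblock P None.
have B0mem : B0 \in P by apply: pblock_mem; rewrite covP inE.
have NB0 : None \in B0 by rewrite mem_pblock covP inE.
have blk T x : T \in P -> x \in T -> x \in B0 -> T = B0.
  move=> TP xT xB; rewrite -(def_pblock tiP TP xT).
  exact: same_pblock.
have nz a : a \in supp psi -> ext g1 psi (a, eb a) != 0.
  by rewrite ext1E eqxx mulr1 inE.
have pair i j : i != j -> i \in supp psi -> j \in supp psi -> Some i \in B0.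
  move=> nij Hi Hj.
  have c0 : ext g1 psi (i, eb j) = 0.
    by rewrite ext1E (inj_eq eb_inj) eq_sym (negbTE nij) mulr0.
  have [T1 T1P [[x xT Hx] [y yT Hy]]] := sep Pl Pe c0 (nz i Hi) (nz j Hj).
  have T1B : T1 = B0.
    case: y yT Hy => [y'|] yT Hy; first by exfalso; apply: Hy.
    exact: blk yT NB0.
  case: x xT Hx => [x'|] xT Hx; last by exfalso; apply: Hx.
  have : (x' == i) || (x' == j).
    apply/idPn => /norP [n1 n2]; apply: Hx.
    by rewrite /ag_full /= !ffunE (negbTE n1) (negbTE n2).
  case/orP => /eqP Ex; move: xT; rewrite Ex T1B // => jB.
  pose e2 : qubits d := [ffun x => (x == i) || (x == j)].
  have c3 : ext g1 psi (j, e2) = 0.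
    rewrite ext1E; case: (e2 =P eb j) => [E|]; last by rewrite mulr0.
    have := congr1 (fun f : qubits d => f i) E; rewrite !ffunE eqxx /=.
    by rewrite (negbTE nij).
  have [T3 T3P [[x3 xT3 Hx3] [y3 yT3 Hy3]]] := sep Pl Pe c3 (nz j Hj) (nz i Hi).
  have iT3 : Some i \in T3.
    case: x3 xT3 Hx3 => [z|] xT3 Hx3; last by exfalso; apply: Hx3.
    case: (eqVneq z i) => [<- //|nxi]; exfalso; apply: Hx3.
    by rewrite /ag_full /= !ffunE (negbTE nxi).
  have T3B : T3 = B0.
    case: y3 yT3 Hy3 => [w|] yT3 Hy3; last exact: blk yT3 NB0.
    case: (eqVneq w j) => [Ey|nyj].
      by move: yT3; rewrite Ey => yT3; exact: blk yT3 jB.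
    exfalso; apply: Hy3.
    by rewrite /ag_full /= !ffunE (negbTE nyj) orbF.
  by rewrite -T3B.
have allB i : i \in supp psi -> Some i \in B0.
  move=> Hi; have [x [y [Hx Hy nxy]]] := card_gt1P H2.
  case: (eqVneq x i) => [Exi|nxi].
    apply: (pair i y) => //; by rewrite -Exi.
  apply: (pair i x) => //; by rewrite eq_sym.
have sub : None |: [set Some i | i in supp psi] \subset B0.
  apply/subsetP => z /setU1P [->//|/imsetP [i Hi ->]]; exact: allB.
have := leq_trans (subset_leq_card sub) (Pk _ B0mem).
rewrite cardsU1 (card_imset _ (@Some_inj _)).
have -> : (None \notin [set Some i | i in supp psi]) = true.
  by apply/negP => /imsetP [].
by rewrite add1n ltnS.
Qed.

End Conc.

Section Comp.
Variable C : numClosedFieldType.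
Variable d : nat.

Lemma natb_mul (a b : bool) : (a%:R * b%:R : C) = (a && b)%:R.
Proof. by rewrite -natrM mulnb. Qed.

Lemma sum_pair (T1 T2 : finType) (G : (T1 * T2)%type -> C) :
  \sum_z G z = \sum_a \sum_b G (a, b).
Proof. by rewrite pair_bigA; apply: eq_bigr => [[a b]]. Qed.

Definition fl (i : 'I_d) (b : qubits d) : qubits d :=
  [ffun j => if j == i then ~~ b j else b j].

Lemma forall_ffun (b F : qubits d) : [forall j, b j == F j] = (b == F).
Proof.
apply/forallP/eqP => [H|->//]; apply/ffunP => j; exact/eqP/H.
Qed.

Lemma UA_E (x z : ('I_d * qubits d)%type) :
  U_A C x z = (z == (x.1, fl x.1 x.2))%:R.
Proof.
rewrite /U_A /qtensor.
rewrite (eq_bigr (fun j => (z.2 j == fl x.1 x.2 j)%:R)) => [|j _].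
  rewrite prod_bool forall_ffun natb_mul eq_sym.
  by case: z => z1 z2; rewrite xpair_eqE.
rewrite ffunE; case: (j == x.1); rewrite /sigmax /id2;
  by case: (x.2 j); case: (z.2 j).
Qed.

Lemma Q0_E (c c' : qubits d) :
  qtensor (fun _ => proj0 C) c c' = [forall j, ~~ c j && ~~ c' j]%:R.
Proof. by rewrite /qtensor /proj0 prod_bool. Qed.

Lemma flz i b : [forall j, ~~ fl i b j] = (b == eb i).
Proof.
apply/forallP/eqP => [H|->] .
  apply/ffunP => j; have := H j; rewrite !ffunE; case: (j == i); by case: (b j).
by move=> j; rewrite !ffunE; case: (j == i).
Qed.

Lemma rho_primeE (rho : op C 'I_d) x1 x2 y1 y2 :
  rho_prime rho (x1, x2) (y1, y2) =
  rho x1 y1 * (x2 == eb x1)%:R * (y2 == eb y1)%:R.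
Proof.
rewrite /rho_prime /opmul.
rewrite (sum_only (z0 := (x1, fl x1 x2))) => [|z Hz]; last by rewrite UA_E (negbTE Hz) mul0r.
rewrite UA_E eqxx mul1r.
rewrite (sum_only (z0 := (y1, fl y1 y2))) => [|w Hw]; last first.
  by rewrite /adj UA_E (negbTE Hw) conjC0 mulr0.
rewrite /adj UA_E eqxx conjC1 mulr1 /tens /= Q0_E -mulrA natb_mul.
congr (_ * _%:R).
have -> : [forall j, ~~ fl x1 x2 j && ~~ fl y1 y2 j] =
          [forall j, ~~ fl x1 x2 j] && [forall j, ~~ fl y1 y2 j].
  apply/forallP/andP => [H|[/forallP H1 /forallP H2] j].
    by split; apply/forallP => j; case/andP: (H j).
  by rewrite H1 H2.
by rewrite !flz.
Qed.

Lemma R1 (rho : op C 'I_d) : repr_by (@g1 d) (rho_prime rho) rho.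
Proof.
move=> [x1 x2] [y1 y2]; rewrite rho_primeE.
rewrite (sum_only (z0 := x1)) => [|a Ha]; last first.
  by rewrite big1 // => b _; rewrite /g1 xpair_eqE eq_sym (negbTE Ha) !mul0r.
rewrite (sum_only (z0 := y1)) => [|b Hb]; last first.
  by rewrite /g1 !xpair_eqE [y1 == b]eq_sym (negbTE Hb) mulr0 mul0r.
rewrite /g1 !xpair_eqE !eqxx /=.
by rewrite [RHS]mulrC mulrA.
Qed.


Definition ud (m : 'I_d) (b : qubits d) : C :=
  \prod_(j < d) (if b j then omega C d ^- ((j.+1) * (m.+1)) else 1).

Lemma UD_E m (b c : qubits d) : @U_D C d m b c = (b == c)%:R * ud m b.
Proof.
rewrite /U_D /qtensor.
rewrite (eq_bigr (fun j => (b j == c j)%:R *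
   (if b j then omega C d ^- ((j.+1) * (m.+1)) else 1))) => [|j _].
  by rewrite big_split /= prod_bool forall_ffun.
by case: (b j); case: (c j); rewrite ?mul1r ?mul0r.
Qed.

Lemma L_tensR (T1 T2 : finType) (X : op C (T1 * T2)%type) (A : op C T1) x y :
  opmul X (tens A (@id_op C T2)) x y = \sum_u X x (u, y.2) * A u y.1.
Proof.
rewrite /opmul sum_pair; apply: eq_bigr => u _.
rewrite (sum_only (z0 := y.2)) => [|v Hv]; rewrite /tens /id_op /=.
  by rewrite eqxx mulr1.
by rewrite (negbTE Hv) !mulr0.
Qed.

Lemma L_tensL (T1 T2 : finType) (X : op C (T1 * T2)%type) (A : op C T1) x y :
  opmul (tens A (@id_op C T2)) X x y = \sum_u A x.1 u * X (u, x.2) y.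
Proof.
rewrite /opmul sum_pair; apply: eq_bigr => u _.
rewrite (sum_only (z0 := x.2)) => [|v Hv]; rewrite /tens /id_op /=.
  by rewrite eqxx mulr1.
by rewrite eq_sym (negbTE Hv) mulr0 mul0r.
Qed.

Lemma conj_diag (T : finType) (U Y : op C T) (u : T -> C) b b' :
  (forall b c, U b c = (b == c)%:R * u b) ->
  opmul (opmul U Y) (adj U) b b' = u b * Y b b' * (u b')^*.
Proof.
move=> HU; rewrite /opmul (sum_only (z0 := b')) => [|c Hc].
  rewrite (sum_only (z0 := b)) => [|c Hc].
    by rewrite /adj HU eqxx mul1r HU eqxx mul1r.
  by rewrite HU eq_sym (negbTE Hc) !mul0r.
by rewrite /adj HU eq_sym (negbTE Hc) mul0r conjC0 mulr0.
Qed.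

Lemma PT_E (X : op C ('I_d * qubits d)%type) m b b' :
  ptrace_qudit
    (opmul (tens (@proj_ket C _ m) (@id_op C (qubits d)))
      (opmul (tens (@fourier C d) (@id_op C (qubits d)))
        (opmul X (tens (adj (@fourier C d)) (@id_op C (qubits d)))))) b b' =
  \sum_w @fourier C d m w * \sum_v X (w, b) (v, b') * (@fourier C d m v)^*.
Proof.
rewrite /ptrace_qudit (sum_only (z0 := m)) => [|i Hi].
  rewrite L_tensL /= (sum_only (z0 := m)) => [|u Hu].
    rewrite /proj_ket !eqxx mul1r L_tensL /=; apply: eq_bigr => w _.
    by rewrite L_tensR /=.
  by rewrite /proj_ket (negbTE Hu) andbF mul0r.
by rewrite L_tensL big1 // => u _; rewrite /proj_ket (negbTE Hi) mul0r.
Qed.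

Lemma Delta_E (X : op C ('I_d * qubits d)%type) b b' :
  Delta X b b' = \sum_m ud m b *
    (\sum_w @fourier C d m w * \sum_v X (w, b) (v, b') * (@fourier C d m v)^*)
    * (ud m b')^*.
Proof.
rewrite /Delta; apply: eq_bigr => m _.
rewrite (conj_diag _ _ _ (UD_E m)); by rewrite PT_E.
Qed.


Lemma omega_neq0 : (0 < d)%N -> omega C d != 0.
Proof.
move=> d0; rewrite /omega expf_neq0 //; apply/eqP => E.
have := @rootCK C d d0 (-1); rewrite E expr0n (gtn_eqF d0) /= => /eqP.
by rewrite eq_sym oppr_eq0 oner_eq0.
Qed.

Lemma udF (d0 : (0 < d)%N) m a :
  ud m (eb a) * @fourier C d m a = (sqrtC d%:R)^-1.
Proof.
rewrite /ud (bigD1 a) //= ffunE eqxx big1 => [|j Hj]; last first.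
  by rewrite ffunE (negbTE Hj).
rewrite mulr1 /fourier mulrA mulVf ?mul1r //.
by apply: expf_neq0; apply: omega_neq0.
Qed.

Lemma R2 (d0 : (0 < d)%N) (rho : op C 'I_d) :
  repr_by (@eb d) (Delta (rho_prime rho)) rho.
Proof.
move=> b b'; rewrite Delta_E.
case: (pickP (fun a => b == eb a)) => [a0 /eqP -> | Hb]; last first.
  have {}Hb a : (b == eb a) = false := Hb a.
  rewrite big1 => [|m _]; last first.
    rewrite big1 ?mulr0 ?mul0r // => w _; rewrite big1 ?mulr0 // => v _.
    by rewrite rho_primeE (Hb w) !(mulr0, mul0r).
  by rewrite big1 // => a _; rewrite big1 // => a' _; rewrite (Hb a) !mul0r.
case: (pickP (fun a => b' == eb a)) => [a1 /eqP -> | Hb']; last first.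
  have {}Hb' a : (b' == eb a) = false := Hb' a.
  rewrite big1 => [|m _]; last first.
    rewrite big1 ?mulr0 ?mul0r // => w _; rewrite big1 ?mulr0 // => v _.
    by rewrite rho_primeE (Hb' v) !(mulr0, mul0r).
  by rewrite big1 // => a _; rewrite big1 // => a' _; rewrite (Hb' a') mulr0 mul0r.
have E (a a' : 'I_d) : (eb a == eb a') = (a == a') by rewrite (inj_eq (@eb_inj d)).
rewrite [RHS](sum_only (z0 := a0)) => [|a Ha]; last first.
  have Ha' : (a0 == a) = false by rewrite eq_sym (negbTE Ha).
  by rewrite big1 // => a' _; rewrite E Ha' !mul0r.
rewrite [RHS](sum_only (z0 := a1)) => [|a Ha]; last first.
  have Ha' : (a1 == a) = false by rewrite eq_sym (negbTE Ha).
  by rewrite !E Ha' mulr0 mul0r.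
rewrite !eqxx !mul1r.
rewrite (eq_bigr (fun _ => rho a0 a1 / d%:R)) => [|m _].
  rewrite sumr_const card_ord -(mulr_natr (rho a0 a1 / d%:R)) -mulrA mulVf ?mulr1 //.
  by rewrite pnatr_eq0 -lt0n.
rewrite (sum_only (z0 := a0)) => [|w Hw]; last first.
  have Hw' : (a0 == w) = false by rewrite eq_sym (negbTE Hw).
  by rewrite big1 ?mulr0 // => v _; rewrite rho_primeE E Hw' !(mulr0, mul0r).
rewrite (sum_only (z0 := a1)) => [|v Hv]; last first.
  have Hv' : (a1 == v) = false by rewrite eq_sym (negbTE Hv).
  by rewrite rho_primeE !E Hv' !(mulr0, mul0r).
rewrite rho_primeE !eqxx !mulr1.
have -> : ud m (eb a0) * (@fourier C d m a0 * (rho a0 a1 * (@fourier C d m a1)^*)) *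
          (ud m (eb a1))^* =
          (ud m (eb a0) * @fourier C d m a0) * rho a0 a1 *
          (ud m (eb a1) * @fourier C d m a1)^*.
  move: (@fourier C d m a0) (@fourier C d m a1) (ud m (eb a0)) (ud m (eb a1)) (rho a0 a1) => f0 f1 u0 u1 r.
  by rewrite rmorphM /= -!mulrA; do 3 congr (_ * _); exact: mulrC.
rewrite !udF // geC0_conj; last by rewrite invr_ge0 sqrtC_ge0 ler0n.
by rewrite mulrC mulrA -expr2 exprVn sqrtCK mulrC.
Qed.

End Comp.

Unset Implicit Arguments. Set Strict Implicit.

Theorem theorem2 (C : numClosedFieldType) (d : nat) (rho : op C 'I_d)
    (Hrho : density rho) (k : nat) (hk2 : (2 <= k)%N) (hkd : (k <= d)%N) :
  (coherence_number_is rho k <->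
     edepth_is (@ag_full d) (rho_prime rho) k.+1) /\
  (edepth_is (@ag_full d) (rho_prime rho) k.+1 <->
     edepth_is (@ag_qubits d) (Delta (rho_prime rho)) k).
Proof.
have d0 : (0 < d)%N by apply: leq_trans hkd; apply: leq_trans hk2.
pose i0 : 'I_d := Ordinal d0.
pose u0 : 'I_d -> C := fun a => (a == i0)%:R.
have u1 : \sum_a `|u0 a| ^+ 2 = 1.
  rewrite (sum_only (z0 := i0)) => [|a Ha]; first by rewrite /u0 eqxx normr1 expr1n.
  by rewrite /u0 (negbTE Ha) normr0 expr0n.
have gu m : (1 <= m)%N -> (coh_rank u0 <= m)%N.
  move=> m1; rewrite coh_supp.
  have -> : supp u0 = [set i0].
    apply/setP => t; rewrite !inE /u0; case: (t == i0) => /=; [exact: oner_neq0 | by rewrite eqxx].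
  by rewrite cards1.
have EB m : (1 <= m)%N ->
  (CN_le rho m <-> kproducible (@ag_full d) m.+1 (rho_prime rho)).
  move=> m1; split.
    apply: (push (@g1_inj d) (R1 rho)) => psi u g; exact: good_a u g.
  apply: (pull (@g1_inj d) (R1 rho) u1 (gu m m1)) => psi u g.
  exact: good_b m1 g.
have EC m : (1 <= m)%N ->
  (CN_le rho m <-> kproducible (@ag_qubits d) m (Delta (rho_prime rho))).
  move=> m1; split.
    apply: (push (@eb_inj d) (R2 d0 rho)) => psi u g; exact: good_c u g m1.
  apply: (pull (@eb_inj d) (R2 d0 rho) u1 (gu m m1)) => psi u g.
  exact: good_d g.
case: k hk2 hkd => [|k1] // hk2 _.
have k1p : (1 <= k1)%N by [].
rewrite /coherence_number_is /edepth_is /=.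
have B1 := EB _ (ltn0Sn k1).
have B2 := EB _ k1p.
have C1 := EC _ (ltn0Sn k1).
have C2 := EC _ k1p.
clear -B1 B2 C1 C2; tauto.
Qed.
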